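(* Let $n\ge2$ and let $Q$ be the $n\times n$ anti-comonotone checkerboard copula, i.e. $Q_{ij}=\frac1n$ if $i+j=n+1$ and $Q_{ij}=0$ otherwise. Then for every $n\times n$ checkerboard copula $P$ there exist nonnegative real numbers $a_{ij}$ ($i,j=1,\dots,n-1$) such that $$P=Q+\sum_{i=1}^{n-1}\sum_{j=1}^{n-1}a_{ij}T^{ij}.$$
   Context: An $n\times n$ checkerboard copula is a real $n\times n$ matrix with nonnegative entries whose row and column sums all equal $\frac1n$. For $i,j\in\{1,\dots,n-1\}$, $T^{ij}=\mathbf{e}_i\mathbf{e}_j^\top+\mathbf{e}_{i+1}\mathbf{e}_{j+1}^\top-\mathbf{e}_i\mathbf{e}_{j+1}^\top-\mathbf{e}_{i+1}\mathbf{e}_j^\top$, where $\mathbf{e}_k$ is the $k$-th standard unit column vector of $\mathbb{R}^n$. *)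

(* Defs.v *)
From mathcomp Require Import all_boot all_order all_algebra.
From mathcomp Require Import reals.
Set Implicit Arguments. Unset Strict Implicit. Unset Printing Implicit Defensive.
Import Order.TTheory GRing.Theory Num.Theory.
Local Open Scope ring_scope.

(* Indices are 0-based: row/column k : 'I_n corresponds to k+1 in the paper. *)

Definition checkerboard_copula (R : realType) (n : nat) (P : 'M[R]_n) : Prop :=
  (forall i j, 0 <= P i j) /\
  (forall i, \sum_(j < n) P i j = n%:R^-1) /\
  (forall j, \sum_(i < n) P i j = n%:R^-1).

(* Anti-comonotone checkerboard copula: Q_{ij} = 1/n iff i + j = n + 1 (1-based),
   i.e. i + j = n - 1 for 0-based indices. *)
Definition anti_comonotone (R : realType) (n : nat) : 'M[R]_n :=
  \matrix_(i < n, j < n) (if (i + j)%N == n.-1 then n%:R^-1 else 0).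

(* T^{ij} for i, j in {1..n-1} (paper), here i, j : 'I_n.-1 (0-based):
   e_i e_j^T + e_{i+1} e_{j+1}^T - e_i e_{j+1}^T - e_{i+1} e_j^T. *)
Definition Tmx (R : realType) (n : nat) (i j : 'I_n.-1) : 'M[R]_n :=
  \matrix_(k < n, l < n)
    ((((k == i :> nat) && (l == j :> nat)) || ((k == i.+1 :> nat) && (l == j.+1 :> nat)))%:R
     - (((k == i :> nat) && (l == j.+1 :> nat)) || ((k == i.+1 :> nat) && (l == j :> nat)))%:R).

(* Main.v *)
Require Import Defs.
From mathcomp Require Import all_boot all_order all_algebra.
From mathcomp Require Import reals.
From mathcomp Require Import ring lra zify.
Import Order.TTheory GRing.Theory Num.Theory.
Local Open Scope ring_scope.

Lemma sum_ind (R : realType) (m k : nat) (x : nat -> R) :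
  \sum_(i < m) (k == i)%:R * x i = if (k < m)%N then x k else 0.
Proof.
elim: m => [|m IH]; first by rewrite big_ord0.
rewrite big_ord_recr /= IH.
case: (ltngtP k m) => h.
- by rewrite mul0r addr0 (ltn_trans h (ltnSn m)).
- by rewrite mul0r addr0 ltnNge h.
- by rewrite h mul1r add0r ltnSn.
Qed.

Lemma tele (R : realType) (n k : nat) (g : nat -> R) :
  (0 < n)%N -> g 0%N = 0 -> g n = 0 -> (k < n)%N ->
  \sum_(i < n.-1) (((k == i)%:R - (k == i.+1)%:R) * g i.+1) = g k.+1 - g k.
Proof.
case: n => [//|m] _ g0 gn /= hk.
under eq_bigr do rewrite mulrBl.
rewrite sumrB (sum_ind _ _ k (fun i => g i.+1)).
have -> : (if (k < m)%N then g k.+1 else 0) = g k.+1.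
  case: ifP => // /negbT; rewrite -leqNgt => h.
  by have -> : k = m by apply/eqP; rewrite eqn_leq h -ltnS hk.
congr (_ - _).
case: k hk => [|k] hk.
  by rewrite g0 big1 // => i _; rewrite mul0r.
under eq_bigr do rewrite eqSS.
by rewrite (sum_ind _ _ k (fun i => g i.+1)) ifT.
Qed.

Lemma delta_ord (R : realType) (n : nat) (k : 'I_n) (x : 'I_n -> R) :
  \sum_(k' < n) ((k' : nat) == k)%:R * x k' = x k.
Proof.
rewrite (bigD1 k) //= eqxx mul1r big1 ?addr0 // => k' nk.
rewrite (_ : ((k' : nat) == k) = false) ?mul0r //.
by apply/negbTE; apply: contra nk => /eqP h; apply/eqP/val_inj.
Qed.

Lemma ind_diff (R : realType) (k i : nat) :
  ((k < i.+1)%N%:R - (k < i)%N%:R : R) = (k == i)%:R.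
Proof.
case: (ltngtP k i) => h.
- by rewrite (ltn_trans h (ltnSn i)) subrr.
- by rewrite ltnNge h subrr.
- by rewrite h ltnSn subr0.
Qed.

Definition Fc (R : realType) (n : nat) (D : 'M[R]_n) (i j : nat) : R :=
  \sum_(k < n) \sum_(l < n) (k < i)%N%:R * (l < j)%N%:R * D k l.
Arguments Fc {R n}.

Lemma Fc_diffr (R : realType) (n : nat) (D : 'M[R]_n) (k : 'I_n) (j : nat) :
  Fc D k.+1 j - Fc D k j = \sum_(l < n) (l < j)%N%:R * D k l.
Proof.
rewrite /Fc -sumrB.
rewrite -(@delta_ord _ _ k (fun k' => \sum_(l < n) (l < j)%N%:R * D k' l)).
apply: eq_bigr => k' _; rewrite -sumrB mulr_sumr; apply: eq_bigr => l _.
by rewrite -!mulrA -mulrBl ind_diff.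
Qed.

Lemma Fc_entry (R : realType) (n : nat) (D : 'M[R]_n) (k l : 'I_n) :
  D k l = (Fc D k.+1 l.+1 - Fc D k.+1 l) - (Fc D k l.+1 - Fc D k l).
Proof.
have -> : (Fc D k.+1 l.+1 - Fc D k.+1 l) - (Fc D k l.+1 - Fc D k l)
  = (Fc D k.+1 l.+1 - Fc D k l.+1) - (Fc D k.+1 l - Fc D k l) by ring.
rewrite !Fc_diffr -sumrB.
rewrite -(@delta_ord _ _ l (fun l' => D k l')).
by apply: eq_bigr => l' _; rewrite -mulrBl ind_diff.
Qed.

Lemma Fc0l (R : realType) (n : nat) (D : 'M[R]_n) j : Fc D 0 j = 0.
Proof. by rewrite /Fc big1 // => k _; rewrite big1 // => l _; rewrite !mul0r. Qed.

Lemma Fc0r (R : realType) (n : nat) (D : 'M[R]_n) i : Fc D i 0 = 0.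
Proof. by rewrite /Fc big1 // => k _; rewrite big1 // => l _; rewrite mulr0 mul0r. Qed.

Lemma Fcnr (R : realType) (n : nat) (D : 'M[R]_n) i :
  (forall k, \sum_(l < n) D k l = 0) -> Fc D i n = 0.
Proof.
move=> rows; rewrite /Fc big1 // => k _.
under eq_bigr do rewrite ltn_ord mulr1.
by rewrite -mulr_sumr rows mulr0.
Qed.

Lemma Fcnl (R : realType) (n : nat) (D : 'M[R]_n) j :
  (forall l, \sum_(k < n) D k l = 0) -> Fc D n j = 0.
Proof.
move=> cols; rewrite /Fc exchange_big big1 // => l _.
under eq_bigr do rewrite ltn_ord mul1r.
by rewrite -mulr_sumr cols mulr0.
Qed.

Lemma Fc_block (R : realType) (n : nat) (D : 'M[R]_n) i j :
  (forall k, \sum_(l < n) D k l = 0) -> (forall l, \sum_(k < n) D k l = 0) ->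
  Fc D i j = \sum_(k < n) \sum_(l < n) (i <= k)%N%:R * (j <= l)%N%:R * D k l.
Proof.
move=> rows cols; apply/eqP; rewrite -subr_eq0; apply/eqP.
rewrite /Fc -sumrB.
have E : forall k l : 'I_n, (k < i)%N%:R * (l < j)%N%:R * D k l -
    (i <= k)%N%:R * (j <= l)%N%:R * D k l =
    (k < i)%N%:R * D k l + (l < j)%N%:R * D k l - D k l.
  move=> k l; rewrite [(i <= k)%N]leqNgt [(j <= l)%N]leqNgt.
  by case: (k < i)%N; case: (l < j)%N; rewrite /= ?mul1r ?mul0r ?subr0; ring.
under eq_bigr do rewrite -sumrB.
under eq_bigr do under eq_bigr do rewrite E.
under eq_bigr do rewrite sumrB big_split /=.
rewrite sumrB big_split /=.
under eq_bigr do rewrite -mulr_sumr rows mulr0.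
rewrite big1 // add0r.
rewrite [X in X - _]exchange_big [X in X - _]big1 /=; last first.
  by move=> l _; rewrite -mulr_sumr cols mulr0.
by rewrite add0r big1 ?oppr0 // => k _; rewrite rows.
Qed.

Lemma Q_row (R : realType) (n : nat) (k : 'I_n) :
  \sum_(l < n) anti_comonotone R n k l = n%:R^-1.
Proof.
have hk := ltn_ord k.
rewrite (eq_bigr (fun l : 'I_n => (n.-1 - k == l)%N%:R * n%:R^-1)); last first.
  move=> l _; rewrite mxE.
  have -> : (k + l == n.-1)%N = (n.-1 - k == l)%N by apply/eqP/eqP; lia.
  by case: eqP; rewrite ?mul1r ?mul0r.
rewrite (sum_ind _ _ _ (fun _ => n%:R^-1)) ifT //; lia.
Qed.

Lemma Q_col (R : realType) (n : nat) (l : 'I_n) :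
  \sum_(k < n) anti_comonotone R n k l = n%:R^-1.
Proof.
have hl := ltn_ord l.
rewrite (eq_bigr (fun k : 'I_n => (n.-1 - l == k)%N%:R * n%:R^-1)); last first.
  move=> k _; rewrite mxE.
  have -> : (k + l == n.-1)%N = (n.-1 - l == k)%N by apply/eqP/eqP; lia.
  by case: eqP; rewrite ?mul1r ?mul0r.
rewrite (sum_ind _ _ _ (fun _ => n%:R^-1)) ifT //; lia.
Qed.

Lemma D_rows (R : realType) (n : nat) (P : 'M[R]_n) :
  checkerboard_copula P ->
  forall k, \sum_(l < n) (P - anti_comonotone R n) k l = 0.
Proof.
move=> [_ [rP _]] k.
rewrite (eq_bigr (fun l => P k l - anti_comonotone R n k l)); last first.
  by move=> l _; rewrite [LHS]mxE [X in _ + X]mxE.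
by rewrite sumrB rP Q_row subrr.
Qed.

Lemma D_cols (R : realType) (n : nat) (P : 'M[R]_n) :
  checkerboard_copula P ->
  forall l, \sum_(k < n) (P - anti_comonotone R n) k l = 0.
Proof.
move=> [_ [_ cP]] l.
rewrite (eq_bigr (fun k => P k l - anti_comonotone R n k l)); last first.
  by move=> k _; rewrite [LHS]mxE [X in _ + X]mxE.
by rewrite sumrB cP Q_col subrr.
Qed.

Lemma Fc_ge0 (R : realType) (n : nat) (P : 'M[R]_n) i j :
  checkerboard_copula P -> 0 <= Fc (P - anti_comonotone R n) i j.
Proof.
move=> cp; have [P0 _] := cp.
case: (boolP [exists k : 'I_n, exists l : 'I_n,
   [&& (k < i)%N, (l < j)%N & (k + l == n.-1)%N]]).
- case/existsP => k0 /existsP [l0 /and3P [h1 h2 /eqP h3]].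
  rewrite (Fc_block _ _ _ _ _ (D_rows _ _ _ cp) (D_cols _ _ _ cp)).
  apply: sumr_ge0 => k _; apply: sumr_ge0 => l _.
  rewrite !mxE.
  case: (leqP i k) => hk; case: (leqP j l) => hl; rewrite ?(mul0r, mulr0, mul1r) //.
  have -> : (k + l == n.-1)%N = false by apply/negbTE/eqP; lia.
  by rewrite subr0.
- move/existsPn => H.
  apply: sumr_ge0 => k _; apply: sumr_ge0 => l _.
  rewrite !mxE.
  case: (ltnP k i) => hk; case: (ltnP l j) => hl; rewrite ?(mul0r, mulr0, mul1r) //.
  move: (H k) => /existsPn /(_ l); rewrite hk hl /= => /negbTE ->.
  by rewrite subr0.
Qed.

Lemma Tmx_entry (R : realType) (n : nat) (i j : 'I_n.-1) (k l : 'I_n) :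
  Tmx R i j k l = ((k == i :> nat)%:R - (k == i.+1 :> nat)%:R) *
                  ((l == j :> nat)%:R - (l == j.+1 :> nat)%:R).
Proof.
rewrite mxE.
have nk : ~~ ((k == i :> nat) && (k == i.+1 :> nat)).
  by apply/negP => /andP [/eqP -> ]; rewrite (ltn_eqF (ltnSn i)).
have nl : ~~ ((l == j :> nat) && (l == j.+1 :> nat)).
  by apply/negP => /andP [/eqP -> ]; rewrite (ltn_eqF (ltnSn j)).
move: nk nl.
case: (k == i :> nat); case: (k == i.+1 :> nat);
case: (l == j :> nat); case: (l == j.+1 :> nat) => //= _ _; ring.
Qed.

Theorem lemma9 (R : realType) (n : nat) (hn : (2 <= n)%N) (P : 'M[R]_n) :
  checkerboard_copula P ->
  exists a : 'I_n.-1 -> 'I_n.-1 -> R,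
    (forall i j, 0 <= a i j) /\
    P = anti_comonotone R n + \sum_(i < n.-1) \sum_(j < n.-1) a i j *: Tmx R i j.
Proof.
move=> cp.
pose D := P - anti_comonotone R n.
have hn0 : (0 < n)%N by apply: ltnW.
have rows := D_rows _ _ _ cp; have cols := D_cols _ _ _ cp.
exists (fun i j : 'I_n.-1 => Fc D i.+1 j.+1); split.
  by move=> i j; apply: Fc_ge0.
apply/matrixP => k l.
rewrite [RHS]mxE summxE.
under eq_bigr do rewrite summxE.
under eq_bigr do under eq_bigr do rewrite mxE Tmx_entry.
have inner : forall i : 'I_n.-1,
  \sum_(j < n.-1) Fc D i.+1 j.+1 *
     (((k == i :> nat)%:R - (k == i.+1 :> nat)%:R) *
      ((l == j :> nat)%:R - (l == j.+1 :> nat)%:R)) =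
  ((k == i :> nat)%:R - (k == i.+1 :> nat)%:R) * (Fc D i.+1 l.+1 - Fc D i.+1 l).
  move=> i.
  rewrite -(tele _ n l (fun j => Fc D i.+1 j) hn0 (Fc0r _ _ _ _)
             (Fcnr _ _ _ _ rows) (ltn_ord l)).
  by rewrite mulr_sumr; apply: eq_bigr => j _; ring.
under eq_bigr do rewrite inner.
rewrite (tele _ n k (fun i => Fc D i l.+1 - Fc D i l) hn0); last first.
- exact: ltn_ord.
- by rewrite !(Fcnl _ _ _ _ cols) subrr.
- by rewrite !Fc0l subrr.
by rewrite -Fc_entry /D [X in _ + X]mxE [X in _ + (_ + X)]mxE addrC subrK.
Qed.
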